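(* Let $U$ be a finite set, $d$ an $\alpha$-relaxed semi-metric distance on $U$ with $\alpha\ge 1$, $\mathcal{M}=\langle U,\mathcal{F}\rangle$ a matroid, and $S,O$ two bases of $\mathcal{M}$. Let $A=O\cap S$, $B=S\setminus A=\{b_1,\dots,b_t\}$, $C=O\setminus A$, and let $g:B\to C$ be a bijection such that $S-b+g(b)\in\mathcal{F}$ for every $b\in B$; set $c_i=g(b_i)$. If $t>2$, then $$\alpha\Big(d(B,C)-\sum_{i=1}^t d(b_i,c_i)\Big)\;\ge\; d(C).$$
   Context: An $\alpha$-relaxed semi-metric distance on $U$ (with $\alpha\ge 1$) is a function $d:U\times U\to\mathbb{R}_{\ge 0}$ with $d(u,v)=d(v,u)$, $d(u,u)=0$, satisfying $d(u,v)\le \alpha\,(d(v,w)+d(w,u))$ for all $u,v,w\in U$. For $X\subseteq U$, $d(X)=\sum_{\{u,v\}\subseteq X,\,u\ne v} d(u,v)$; for disjoint $X,Y$, $d(X,Y)=\sum_{x\in X,y\in Y} d(x,y)$. $S-b+c$ denotes $(S\setminus\{b\})\cup\{c\}$. *)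

(* Defs.v *)
From mathcomp Require Import all_boot all_order all_algebra.
Set Implicit Arguments. Unset Strict Implicit. Unset Printing Implicit Defensive.
Import Order.TTheory GRing.Theory Num.Theory.
Local Open Scope ring_scope.

Definition relaxed_semimetric (U : finType) (R : realFieldType)
  (alpha : R) (d : U -> U -> R) : Prop :=
  1 <= alpha /\
  (forall u v, 0 <= d u v) /\
  (forall u v, d u v = d v u) /\
  (forall u, d u u = 0) /\
  (forall u v w, d u v <= alpha * (d v w + d w u)).

Definition is_matroid (U : finType) (F : {set {set U}}) : Prop :=
  set0 \in F /\
  (forall X Y : {set U}, Y \in F -> X \subset Y -> X \in F) /\
  (forall X Y : {set U}, X \in F -> Y \in F -> #|X| < #|Y| ->
     exists2 y, y \in Y :\: X & y |: X \in F)%N.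

Definition is_basis (U : finType) (F : {set {set U}}) (S : {set U}) : Prop :=
  S \in F /\ (forall T : {set U}, T \in F -> S \subset T -> T = S).

(* d(X): sum over unordered pairs {u,v} of distinct elements of X *)
Definition dset (U : finType) (R : realFieldType) (d : U -> U -> R)
  (X : {set U}) : R :=
  \sum_(u in X) \sum_(v in X | (enum_rank u < enum_rank v)%N) d u v.

Definition dcross (U : finType) (R : realFieldType) (d : U -> U -> R)
  (X Y : {set U}) : R :=
  \sum_(x in X) \sum_(y in Y) d x y.

(* Main.v *)
Require Import Defs.
From mathcomp Require Import all_boot all_order all_algebra.
From mathcomp Require Import ring.
Import Order.TTheory GRing.Theory Num.Theory.
Local Open Scope ring_scope.

Section H.
Variables (U : finType) (R : realFieldType).

Lemma condsum (f : U -> U -> R) (B : {set U}) :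
  \sum_(x in B) \sum_(y in B :\ x) f x y =
  \sum_x \sum_y (if [&& x \in B, y \in B & y != x] then f x y else 0).
Proof.
rewrite big_mkcond /=; apply: eq_bigr => x _.
case xB: (x \in B); last by rewrite big1.
rewrite big_mkcond /=; apply: eq_bigr => y _.
by rewrite !inE andbC.
Qed.

Lemma swapD (f : U -> U -> R) (B : {set U}) :
  \sum_(x in B) \sum_(y in B :\ x) f x y = \sum_(y in B) \sum_(x in B :\ y) f x y.
Proof.
rewrite condsum (condsum (fun y x => f x y)) exchange_big /=.
apply: eq_bigr => y _; apply: eq_bigr => x _.
by rewrite eq_sym; case: (x \in B); case: (y \in B).
Qed.

Lemma cond2 (P : U -> U -> bool) (f : U -> U -> R) (X : {set U}) :
  \sum_(u in X) \sum_(v in X | P u v) f u v =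
  \sum_u \sum_v (if [&& u \in X, v \in X & P u v] then f u v else 0).
Proof.
rewrite big_mkcond /=; apply: eq_bigr => u _.
case uX: (u \in X); last by rewrite big1.
by rewrite big_mkcond /=.
Qed.

Lemma dset2 (d : U -> U -> R) (X : {set U}) :
  (forall u v, d u v = d v u) ->
  2 * dset d X = \sum_(u in X) \sum_(v in X :\ u) d u v.
Proof.
move=> dsym.
have split_ : forall u, \sum_(v in X :\ u) d u v =
   \sum_(v in X | (enum_rank u < enum_rank v)%N) d u v +
   \sum_(v in X | (enum_rank v < enum_rank u)%N) d v u.
  move=> u; rewrite (bigID (fun v => (enum_rank u < enum_rank v)%N)) /=.
  congr (_ + _); apply: eq_big => v.
  - rewrite !inE; case: (v \in X); rewrite ?andbF //=.
    case: eqP => [->|]; first by rewrite ltnn.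
    by move=> _; rewrite andbT.
  - by rewrite dsym.
  - rewrite !inE; case: (v \in X); rewrite ?andbF //=.
    case: eqP => [->|]; first by rewrite ltnn.
    move=> nvu; rewrite andbT -leqNgt leq_eqVlt; case: ltngtP => //= h.
    by exfalso; apply: nvu; apply: enum_rank_inj; apply: val_inj.
  - by rewrite dsym.
rewrite (eq_bigr _ (fun u _ => split_ u)) big_split /= mulr_natl mulr2n.
congr (_ + _).
rewrite /dset (cond2 (fun u v => enum_rank u < enum_rank v)%N (fun u v => d u v)).
rewrite (cond2 (fun u v => enum_rank v < enum_rank u)%N (fun u v => d v u)) exchange_big /=.
apply: eq_bigr => u _; apply: eq_bigr => v _.
by case: (u \in X); case: (v \in X).
Qed.

End H.
Arguments swapD {U R}.
Arguments dset2 {U R}.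
Arguments condsum {U R}.
Arguments cond2 {U R}.

Theorem lemma4 (U : finType) (R : realFieldType) (alpha : R)
  (d : U -> U -> R) (F : {set {set U}}) (S O : {set U}) (g : U -> U) :
  relaxed_semimetric alpha d ->
  is_matroid F ->
  is_basis F S -> is_basis F O ->
  let A := O :&: S in
  let B := S :\: A in
  let C := O :\: A in
  {in B &, injective g} ->
  g @: B = C ->
  (forall b, b \in B -> (g b |: (S :\ b)) \in F) ->
  (2 < #|B|)%N ->
  alpha * (dcross d B C - \sum_(b in B) d b (g b)) >= dset d C.
Proof.
move=> [a1 [d0 [dsym [dd tri]]]] _ _ _ A B C ginj gB _ tB.
have gC : forall x, x \in B -> g x \in C by move=> x xB; rewrite -gB imset_f.
have reC : forall h : U -> R, \sum_(c in C) h c = \sum_(x in B) h (g x).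
  by move=> h; rewrite -gB big_imset.
set T := \sum_(x in B) \sum_(k in B :\ x) d k (g x).
have Ha : dcross d B C - \sum_(b in B) d b (g b) = T.
  rewrite /dcross (eq_bigr (fun b => d b (g b) + \sum_(y in B :\ b) d b (g y))).
    by rewrite big_split /= addrAC subrr add0r (swapD (fun b y => d b (g y))).
  by move=> b bB; rewrite reC (big_setD1 b bB).
have Hb : 2 * dset d C = \sum_(x in B) \sum_(y in B :\ x) d (g x) (g y).
  rewrite dset2 // (reC (fun u => \sum_(v in C :\ u) d u v)).
  apply: eq_bigr => x xB.
  apply: (@addrI _ (d (g x) (g x))).
  by rewrite -(big_setD1 _ (gC x xB)) reC (big_setD1 x xB).
have Hc : forall x k, x \in B -> k \in B :\ x -> #|B :\ x :\ k| = (#|B| - 2)%N.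
  move=> x k xB kB; have := cardsD1 x B; have := cardsD1 k (B :\ x).
  rewrite xB kB /= => -> ->; rewrite !add1n.
  by rewrite subn2.
have Hd : forall x y, x \in B -> y \in B :\ x ->
   (#|B| - 2)%:R * d (g x) (g y) <= alpha * \sum_(k in B :\ x :\ y) (d k (g x) + d k (g y)).
  move=> x y xB yB; rewrite -(Hc x y xB yB) mulr_natl -sumr_const mulr_sumr.
  apply: ler_sum => k _; rewrite addrC (dsym k (g y)); exact: tri.
have He : forall x, x \in B -> \sum_(y in B :\ x) \sum_(k in B :\ x :\ y) d k (g x)
    = (#|B| - 2)%:R * \sum_(k in B :\ x) d k (g x).
  move=> x xB; rewrite (swapD (fun y k => d k (g x))) mulr_sumr.
  apply: eq_bigr => k kB; rewrite sumr_const (Hc x k xB kB) mulr_natl //.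
have E2 : \sum_(x in B) \sum_(y in B :\ x) \sum_(k in B :\ x :\ y) d k (g y)
    = (#|B| - 2)%:R * T.
  rewrite (swapD (fun x y => \sum_(k in B :\ x :\ y) d k (g y))) /T mulr_sumr.
  apply: eq_bigr => y yB; rewrite -(He y yB); apply: eq_bigr => x _.
  by apply: eq_bigl => k; rewrite !inE; case: (k == x); case: (k == y).
have E1 : \sum_(x in B) \sum_(y in B :\ x) \sum_(k in B :\ x :\ y) d k (g x)
    = (#|B| - 2)%:R * T.
  by rewrite /T mulr_sumr; apply: eq_bigr => x xB; rewrite He.
have tpos : 0 < (#|B| - 2)%:R :> R by rewrite ltr0n subn_gt0.
have Sx : \sum_(x in B) \sum_(y in B :\ x) \sum_(k in B :\ x :\ y) (d k (g x) + d k (g y))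
    = (#|B| - 2)%:R * T + (#|B| - 2)%:R * T.
  rewrite -[X in _ = _ + X]E2 -E1 -big_split /=; apply: eq_bigr => x _.
  rewrite -big_split /=; apply: eq_bigr => y _; by rewrite big_split.
have Hf : (#|B| - 2)%:R * (2 * dset d C) <= (#|B| - 2)%:R * (2 * (alpha * T)).
  rewrite Hb mulr_sumr.
  have -> : (#|B| - 2)%:R * (2 * (alpha * T)) = alpha * ((#|B| - 2)%:R * T + (#|B| - 2)%:R * T).
    by ring.
  rewrite -Sx mulr_sumr; apply: ler_sum => x xB.
  rewrite mulr_sumr mulr_sumr; apply: ler_sum => y yB; exact: Hd.
rewrite ler_pM2l // in Hf.
rewrite Ha -(ler_pM2l (x := 2)) //.
Qed.
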